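(* For any $\alpha\in\mathbb{R}$, a solution $u=u(x,t)$ of the Cauchy problem $$u_t+\tfrac12 u_{xx}=0,\qquad u(x,0)=x^\alpha,$$ is given by $u(x,t)=\mathcal{H}_\alpha(x,t)$, where the initial condition is understood as $\lim_{t\to 0^+}u(x,t)=x^\alpha$.
   Context: $U(a,z)$ is the standard (Whittaker) parabolic cylinder function, $D_\nu(z)=U(-\nu-\tfrac12,z)$, and for $\alpha\in\mathbb{R}$, $t>0$: $\mathcal{H}_\alpha(x,t)=t^{\frac{\alpha}{2}}e^{\frac{x^2}{4t}}U(-\alpha-\tfrac12,\tfrac{x}{\sqrt t})$. *)

(* Defs.v *)
From Stdlib Require Import Reals Lra.
From Coquelicot Require Import Coquelicot.
Open Scope R_scope.

(* [is_pcf_U a f]: f is the standard (Whittaker) parabolic cylinder function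
   U(a, .) restricted to the real line, characterised as in DLMF 12.2/12.9.1:
   f solves Weber's equation  w'' = (z^2/4 + a) w  on R, and is the solution
   recessive at +oo normalised by  U(a,z) ~ z^(-a-1/2) e^(-z^2/4)  (z -> +oo),
   i.e. f(z) * z^(a+1/2) * e^(z^2/4) -> 1.  This determines U(a,.) uniquely. *)
Definition is_pcf_U (a : R) (f : R -> R) : Prop :=
  (forall z, ex_derive f z /\ is_derive (Derive f) z ((z ^ 2 / 4 + a) * f z)) /\
  is_lim (fun z => f z * Rpower z (a + / 2) * exp (z ^ 2 / 4)) p_infty 1.

Definition calH (U : R -> R -> R) (alpha x t : R) : R :=
  Rpower t (alpha / 2) * exp (x ^ 2 / (4 * t)) * U (- alpha - / 2) (x / sqrt t).

(* Main.v *)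
Require Import Defs.
From Stdlib Require Import Reals Lra.
From Coquelicot Require Import Coquelicot.
Open Scope R_scope.
Lemma pde_part (f : R -> R) (a alpha x t : R) :
  a = - alpha - / 2 ->
  (forall z, ex_derive f z /\ is_derive (Derive f) z ((z ^ 2 / 4 + a) * f z)) ->
  0 < t ->
  let H := fun y s => Rpower s (alpha / 2) * exp (y ^ 2 / (4 * s)) * f (y / sqrt s) in
  ex_derive (fun s => H x s) t /\
  ex_derive (fun y => H y t) x /\
  ex_derive (Derive (fun y => H y t)) x /\
  Derive (fun s => H x s) t + / 2 * Derive_n (fun y => H y t) 2 x = 0.
Proof.
  intros Ha hf Ht H.
  assert (hs : 0 < sqrt t) by (apply sqrt_lt_R0; lra).
  assert (hss : sqrt t * sqrt t = t) by (apply sqrt_sqrt; lra).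
  set (s := sqrt t) in *.
  set (c := Rpower t (alpha / 2)).
  assert (hfd : forall z, is_derive f z (Derive f z)) by (intro z; apply Derive_correct, hf).
  assert (hf2 : forall z, Derive (Derive f) z = (z ^ 2 / 4 + a) * f z)
    by (intro z; apply is_derive_unique, hf).
  assert (hP : is_derive (fun u => Rpower u (alpha / 2)) t (alpha / 2 * Rpower t (alpha/2 - 1)))
    by (apply is_derive_Reals, derivable_pt_lim_power; lra).
  assert (hP' : Rpower t (alpha/2 - 1) = c / t).
  { unfold c, Rpower. replace (alpha/2 - 1) with (alpha/2 + - 1) by ring.
    rewrite Rmult_plus_distr_r, exp_plus. unfold Rdiv. f_equal.
    replace (-1 * ln t) with (- ln t) by ring. rewrite exp_Ropp, exp_ln; auto. }
  set (D1 := fun y => c * (exp (y^2/(4*t)) * (2*y/(4*t)) * f (y/s)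
                         + exp (y^2/(4*t)) * (Derive f (y/s) / s))).
  assert (hD1 : forall y, is_derive (fun y => H y t) y (D1 y)).
  { intro y. unfold H, D1. fold s c. auto_derive.
    - apply hf.
    - change (fun x0 : R => f x0) with f. change (y * / s) with (y / s). replace (y * (y * 1) * / (4 * t)) with (y^2/(4*t)) by (unfold Rdiv; ring). field. lra. }
  set (D2 := c * exp (x^2/(4*t)) * ((x/(2*t)) * ((x/(2*t)) * f (x/s) + Derive f (x/s) / s)
             + / (2*t) * f (x/s) + (x/(2*t)) * (Derive f (x/s) / s)
             + ((x/s)^2/4 + a) * f (x/s) / (s*s))).
  assert (hD2 : is_derive D1 x D2).
  { unfold D1, D2. auto_derive.
    - split; [apply hf | split; [eexists; apply hf | auto]].
    - change (fun x0 : R => f x0) with f. change (fun x0 : R => Derive f x0) with (Derive f).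
      change (x * / s) with (x / s). rewrite hf2.
      replace (x * (x * 1) * / (4 * t)) with (x^2/(4*t)) by (unfold Rdiv; ring).
      field. lra.
  }
  assert (hDD : Derive_n (fun y => H y t) 2 x = D2).
  { simpl. rewrite (Derive_ext _ D1). apply is_derive_unique, hD2.
    intro y. apply is_derive_unique, hD1. }
  set (T1 := (alpha / 2 * Rpower t (alpha / 2 - 1)) * exp (x^2/(4*t)) * f (x/s)
     + c * (x^2 * (-4 / (4*t*(4*t)))) * exp (x^2/(4*t)) * f (x/s)
     + c * exp (x^2/(4*t)) * (x * (- (/ (2*s)) / (s*s)) * Derive f (x/s))).
  assert (hT : is_derive (fun u => H x u) t T1).
  { unfold H, T1. auto_derive.
    - fold s. repeat split; try lra. eexists; exact hP. apply hf.
    - change (fun x0 : R => f x0) with f. fold s c. change (x * / s) with (x / s).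
      replace (Derive (fun x0 : R => Rpower x0 (alpha / 2)) t) with (alpha / 2 * Rpower t (alpha / 2 - 1)) by (symmetry; apply is_derive_unique; exact hP).
      replace (x * (x * 1) * / (4 * t)) with (x^2/(4*t)) by (unfold Rdiv; ring).
      unfold Rdiv. ring. }
  split; [eexists; exact hT|].
  split; [eexists; apply hD1|].
  split; [eexists; apply (is_derive_ext D1); [intro y; symmetry; apply is_derive_unique, hD1 | exact hD2]|].
  assert (E1: Derive (fun s => H x s) t = T1) by (apply is_derive_unique; exact hT).
  rewrite hDD, E1. unfold T1, D2.
  rewrite hP'. rewrite Ha. rewrite <- hss. clearbody s c. clear -hs. field. lra.
Qed.
Lemma lim_z (x : R) : 0 < x -> filterlim (fun t => x / sqrt t) (at_right 0) (Rbar_locally p_infty).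
Proof.
  intros hx P [M HM].
  assert (hK : 0 < Rabs M + 1) by (pose proof (Rabs_pos M); lra).
  assert (he : 0 < (x / (Rabs M + 1)) ^ 2) by (apply pow_lt; apply Rdiv_lt_0_compat; lra).
  exists (mkposreal _ he). intros y hy hy0. apply HM.
  unfold ball in hy; simpl in hy; unfold AbsRing_ball, abs, minus, plus, opp in hy; simpl in hy.
  rewrite Ropp_0, Rplus_0_r, Rabs_pos_eq in hy by lra.
  assert (hs : 0 < sqrt y) by (apply sqrt_lt_R0; lra).
  assert (h1 : sqrt y < x / (Rabs M + 1)).
  { rewrite <- (sqrt_pow2 (x / (Rabs M + 1))) by (apply Rlt_le, Rdiv_lt_0_compat; lra).
    apply sqrt_lt_1; lra. }
  assert (h2 : sqrt y * (Rabs M + 1) < x).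
  { apply (Rmult_lt_compat_r (Rabs M + 1)) in h1; auto.
    replace (x / (Rabs M + 1) * (Rabs M + 1)) with x in h1 by (field; lra). exact h1. }
  assert (h3 : Rabs M + 1 < x / sqrt y).
  { apply (Rmult_lt_reg_r (sqrt y)); auto.
    replace (x / sqrt y * sqrt y) with x by (field; lra). lra. }
  pose proof (Rle_abs M). lra.
Qed.

Lemma lim_part (f : R -> R) (a alpha x : R) :
  a = - alpha - / 2 ->
  is_lim (fun z => f z * Rpower z (a + / 2) * exp (z ^ 2 / 4)) p_infty 1 ->
  0 < x ->
  filterlim (fun t => Rpower t (alpha / 2) * exp (x ^ 2 / (4 * t)) * f (x / sqrt t))
    (at_right 0) (locally (Rpower x alpha)).
Proof.
  intros Ha hG hx.
  set (G := fun z => f z * Rpower z (a + / 2) * exp (z ^ 2 / 4)) in hG.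
  apply (filterlim_ext_loc (fun t => G (x / sqrt t) * Rpower x alpha)).
  - exists (mkposreal 1 Rlt_0_1). intros y _ hy. simpl in hy.
    assert (hs : 0 < sqrt y) by (apply sqrt_lt_R0; lra).
    assert (hss : sqrt y * sqrt y = y) by (apply sqrt_sqrt; lra).
    unfold G.
    assert (E : (x / sqrt y) ^ 2 / 4 = x ^ 2 / (4 * (sqrt y * sqrt y))) by (field; lra).
    rewrite E, hss.
    assert (El : ln y = ln (sqrt y) + ln (sqrt y)) by (rewrite <- ln_mult, hss; lra).
    replace (a + / 2) with (- alpha) by (rewrite Ha; ring).
    unfold Rpower.
    unfold Rdiv at 2. rewrite ln_mult, ln_Rinv by (try apply Rinv_0_lt_compat; lra).
    rewrite El.
    replace (exp (alpha / 2 * (ln (sqrt y) + ln (sqrt y))))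
      with (exp (- alpha * (ln x + - ln (sqrt y))) * exp (alpha * ln x))
      by (rewrite <- exp_plus; f_equal; field).
    ring.
  - assert (C : filterlim (fun y : R => y * Rpower x alpha) (locally 1) (locally (1 * Rpower x alpha)))
        by (apply (ex_derive_continuous (fun y => y * Rpower x alpha)); auto_derive; auto).
    rewrite Rmult_1_l in C.
    assert (L : filterlim (fun t => G (x / sqrt t)) (at_right 0) (locally 1)).
    { eapply filterlim_comp; [apply lim_z; auto | exact hG]. }
    exact (filterlim_comp _ _ _ _ _ _ _ _ L C).
Qed.

Theorem mainTheorem4 :
  forall (U : R -> R -> R), (forall a : R, is_pcf_U a (U a)) ->
  forall alpha : R,
    (forall x t : R, 0 < x -> 0 < t ->
       ex_derive (fun s => calH U alpha x s) t /\
       ex_derive (fun y => calH U alpha y t) x /\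
       ex_derive (Derive (fun y => calH U alpha y t)) x /\
       Derive (fun s => calH U alpha x s) t
         + / 2 * Derive_n (fun y => calH U alpha y t) 2 x = 0) /\
    (forall x : R, 0 < x ->
       filterlim (fun t => calH U alpha x t) (at_right 0) (locally (Rpower x alpha))).
Proof.
  intros U hU alpha.
  destruct (hU (- alpha - / 2)) as [hd hl].
  split.
  - intros x t hx ht. unfold calH.
    exact (pde_part (U (- alpha - / 2)) (- alpha - / 2) alpha x t eq_refl hd ht).
  - intros x hx. unfold calH.
    exact (lim_part (U (- alpha - / 2)) (- alpha - / 2) alpha x eq_refl hl hx).
Qed.
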